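(* Let $p$ be the POP of size $3$ on $\{1,2,3\}$ whose only relation is $3<_p2$ (so $1$ is isolated), and let $p'$ be the POP of size $3$ whose only relation is $2<_{p'}3$. Then $p\sim_s p'$. Equivalently, the set of classical patterns $\{132,231,321\}$ is shape-Wilf-equivalent to the set $\{123,213,312\}$: for every Ferrers board $\lambda$, the number of transversals of $\lambda$ avoiding all of $132,231,321$ equals the number of transversals avoiding all of $123,213,312$.
   Context: A partially ordered pattern (POP) $p$ of size $m$ is a partial order $\le_p$ on $[m]$. A Ferrers board $\lambda=(\lambda_1\ge\dots\ge\lambda_n>0)$ with $\lambda_1=n$ is drawn in French notation: rows numbered $1,\dots,n$ from bottom to top, row $i$ consisting of cells $(i,1),\dots,(i,\lambda_i)$. A transversal of $\lambda$ is a $0/1$-filling of its cells with exactly one $1$ in each row and column. A transversal $T$ contains a POP $p$ of size $m$ if there are rows $r_1<\dots<r_m$ and columns $c_1<\dots<c_m$ such that every cell $(r_a,c_b)$ lies in $\lambda$ and the $1$ of column $c_b$ lies in row $r_{\sigma(b)}$ for each $b$ (so $\sigma\in\mathfrak S_m$), with $\sigma(j)<\sigma(j')$ whenever $j<_p j'$; $T$ contains a classical pattern $\alpha\in\mathfrak S_m$ if this holds with $\sigma=\alpha$. Otherwise $T$ avoids it. Two POPs (or sets of patterns) are shape-Wilf-equivalent, $\sim_s$, if for every Ferrers board the numbers of avoiding transversals coincide. *)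

(* Defs.v *)
From mathcomp Require Import all_boot all_order all_fingroup.
Set Implicit Arguments. Unset Strict Implicit. Unset Printing Implicit Defensive.

(* Rows and columns are 0-indexed: row i : 'I_n is row i+1 of the paper,
   and lam i is the length lambda_{i+1}.  Column j : 'I_n is column j+1;
   cell (i, j) lies in the board iff j < lam i. *)
Definition ferrers (n : nat) (lam : 'I_n -> nat) : Prop :=
  (forall i j : 'I_n, i <= j -> lam j <= lam i) /\
  (forall i : 'I_n, 0 < lam i) /\
  (forall i : 'I_n, val i = 0 -> lam i = n).

(* A transversal is encoded as the permutation T : 'S_n sending a row to the
   column holding its 1; all its 1s must lie in the board. *)
Definition transversal (n : nat) (lam : 'I_n -> nat) (T : 'S_n) : bool :=
  [forall i : 'I_n, T i < lam i].

Definition pop_contains (m : nat) (P : rel 'I_m) (n : nat) (lam : 'I_n -> nat)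
    (T : 'S_n) : bool :=
  [exists r : {ffun 'I_m -> 'I_n}, exists c : {ffun 'I_m -> 'I_n},
   exists s : 'S_m,
     [forall a : 'I_m, forall b : 'I_m,
        [&& (a < b) ==> (r a < r b), (a < b) ==> (c a < c b),
            c b < lam (r a) & P a b ==> (s a < s b)]]
     && [forall b : 'I_m, (T^-1)%g (c b) == r (s b)]].

Definition num_avoiders (m : nat) (P : rel 'I_m) (n : nat) (lam : 'I_n -> nat) : nat :=
  #|[set T : 'S_n | transversal lam T && ~~ pop_contains P lam T]|.

Definition shape_wilf_equiv (m : nat) (P Q : rel 'I_m) : Prop :=
  forall (n : nat) (lam : 'I_n -> nat), ferrers lam ->
    num_avoiders P lam = num_avoiders Q lam.

(* p : only relation 3 <_p 2 ; p' : only relation 2 <_p' 3 (1-indexed). *)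
Definition pop_p : rel 'I_3 := fun j j' => (val j == 2) && (val j' == 1).
Definition pop_p' : rel 'I_3 := fun j j' => (val j == 1) && (val j' == 2).

(* Main.v *)
Require Import Defs.
From mathcomp Require Import all_boot all_order all_fingroup.
From mathcomp Require Import zify.
Set Implicit Arguments. Unset Strict Implicit. Unset Printing Implicit Defensive.

Lemma card_perm_split n (P : pred 'S_n.+1) :
  #|[set t : 'S_n.+1 | P t]| =
  \sum_(v < n.+1) #|[set s : 'S_n | P (lift_perm ord_max v s)]|.
Proof.
rewrite -sum1_card (eq_bigl P); last by move=> t; rewrite inE.
rewrite (partition_big (fun t : 'S_n.+1 => t ord_max) predT) //=.
apply: eq_bigr => v _.
rewrite -sum1_card.
rewrite (reindex (lift_perm ord_max v)); last first.
  pose ulsf i (s : 'S_n.+1) k := odflt k (unlift (s i) (s (lift i k))).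
  have ulsfK i (s : 'S_n.+1) k: lift (s i) (ulsf i s k) = s (lift i k).
    rewrite /ulsf; have:= neq_lift i k.
    by rewrite -(can_eq (permK s)) => /unlift_some[] ? ? ->.
  have inj_ulsf: injective (ulsf ord_max _).
    move=> s; apply: can_inj (ulsf (s ord_max) s^-1%g) _ => k'.
    by rewrite {1}/ulsf ulsfK !permK liftK.
  exists (fun s => perm (inj_ulsf s)) => [s _ | s].
    by apply/permP=> k'; rewrite permE /ulsf lift_perm_lift lift_perm_id liftK.
  move/andP=> [_ /eqP si0]; apply/permP=> k.
  case: (unliftP ord_max k) => [k'|] ->; rewrite ?lift_perm_id //.
  by rewrite lift_perm_lift -si0 permE ulsfK.
apply: eq_bigl => s; rewrite inE lift_perm_id eqxx andbT //.
Qed.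

Definition inwin n (h : nat -> nat) (s : 'S_n) := [forall k : 'I_n, s k < h k].
Definition validR (ord : rel nat) n (h : nat -> nat) (s : 'S_n) :=
  [forall i : 'I_n, forall j : 'I_n, forall k : 'I_n,
    [&& i < j, j < k, s i < h k, s j < h k & s k < h k] ==> ord (s j) (s k)].
Definition LCo (ord : rel nat) n (s : 'S_n) (v L : nat) :=
  [forall i : 'I_n, forall j : 'I_n,
    [&& i < j, s i < L.-1 & s j < L.-1] ==> ord (bump v (s j)) v].
Definition hm (h : nat -> nat) := fun k => (h k).-1.
Definition mono (h : nat -> nat) := forall i j, i <= j -> h j <= h i.
Notation LP v s := (lift_perm ord_max v s).

Lemma bump_ltH v u H : v < H -> (bump v u < H) = (u < H.-1).
Proof. by rewrite /bump; case: (leqP v u) => H1 /= H2; lia. Qed.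

Lemma LPl n (v : 'I_n.+1) (s : 'S_n) k : (LP v s (lift ord_max k) : nat) = bump v (s k).
Proof. by rewrite lift_perm_lift. Qed.

Lemma LPm n (v : 'I_n.+1) (s : 'S_n) : LP v s ord_max = v.
Proof. exact: lift_perm_id. Qed.

Lemma inwin_lift n h (s : 'S_n) (v : 'I_n.+1) : mono h ->
  inwin h (LP v s) = (v < h n) && inwin (hm h) s.
Proof.
move=> Hm; apply/forallP/andP.
  move=> H; have Hv := H ord_max; rewrite LPm in Hv; split => //.
  apply/forallP => k; have := H (lift ord_max k).
  rewrite LPl lift_max /hm bump_ltH //.
  by apply: (leq_trans Hv); apply: Hm; apply: ltnW.
move=> [Hv /forallP H] k.
case: (unliftP ord_max k) => [k'|] ->; last by rewrite LPm.
rewrite LPl lift_max bump_ltH; first exact: H.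
by apply: (leq_trans Hv); apply: Hm; apply: ltnW.
Qed.

Lemma valid_lift ord n h (s : 'S_n) (v : 'I_n.+1) :
  (forall v a b, ord (bump v a) (bump v b) = ord a b) -> mono h -> v < h n ->
  validR ord h (LP v s) = validR ord (hm h) s && LCo ord s v (h n).
Proof.
move=> Ho Hm Hv.
have Hvk : forall k : 'I_n, v < h k.
  by move=> k; apply: (leq_trans Hv); apply: Hm; apply: ltnW.
apply/idP/andP.
  move=> /forallP H; split.
    apply/forallP => i; apply/forallP => j; apply/forallP => k.
    have := forallP (forallP (H (lift ord_max i)) (lift ord_max j)) (lift ord_max k).
    by rewrite !LPl !lift_max !bump_ltH // Ho /hm.
  apply/forallP => i; apply/forallP => j.
  have := forallP (forallP (H (lift ord_max i)) (lift ord_max j)) ord_max.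
  rewrite !LPl LPm !lift_max !bump_ltH // Hv /=.
  by rewrite ltn_ord andbT.
move=> [/forallP H1 /forallP H2].
apply/forallP => i; apply/forallP => j; apply/forallP => k.
case: (unliftP ord_max k) => [k'|] ->.
  case: (unliftP ord_max j) => [j'|] ->; last first.
    by apply/implyP => /and5P [_ H _ _ _]; move: H; rewrite lift_max /=; move: (ltn_ord k') => /= ?; lia.
  case: (unliftP ord_max i) => [i'|] ->; last first.
    by apply/implyP => /and5P [H _ _ _ _]; move: H; rewrite lift_max /=; move: (ltn_ord j') => /= ?; lia.
  have := forallP (forallP (H1 i') j') k'.
  by rewrite !LPl !lift_max !bump_ltH // Ho /hm.
case: (unliftP ord_max j) => [j'|] ->; last first.
  by apply/implyP => /and5P [_ H _ _ _]; move: H; rewrite ltnn.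
case: (unliftP ord_max i) => [i'|] ->; last first.
  by apply/implyP => /and5P [H _ _ _ _]; move: H; rewrite lift_max /=; move: (ltn_ord j') => /= ?; lia.
have := forallP (H2 i') j'.
rewrite !LPl LPm !lift_max !bump_ltH // Hv /=.
by rewrite ltn_ord andbT.
Qed.

Definition gtr : rel nat := fun a b => b < a.
Definition firstE n (s : 'S_n) (u m : nat) :=
  [forall i : 'I_n, forall j : 'I_n, ((s i == u :> nat) && (j < i)) ==> (m <= s j)].

Lemma bump_lt_self v x : (bump v x < v) = (x < v).
Proof. by rewrite /bump; case: (leqP v x) => H1 /=; lia. Qed.
Lemma bump_gt_self v x : (v < bump v x) = (v <= x).
Proof. by rewrite /bump; case: (leqP v x) => H1 /=; lia. Qed.
Lemma hord21 v a b : ltn (bump v a) (bump v b) = ltn a b.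
Proof. by rewrite /bump; case: (leqP v a); case: (leqP v b) => /= *; lia. Qed.
Lemma hord12 v a b : gtr (bump v a) (bump v b) = gtr a b.
Proof. by rewrite /gtr /bump; case: (leqP v a); case: (leqP v b) => /= *; lia. Qed.

Lemma exists_pos n (s : 'S_n) w : w < n -> exists i : 'I_n, s i = w :> nat.
Proof. by move=> H; exists (s^-1 (Ordinal H))%g; rewrite permKV. Qed.

Lemma firstE_lift n (s : 'S_n) (v : 'I_n.+1) (u m : nat) : u != v :> nat ->
  firstE (LP v s) u m =
  [forall i : 'I_n, forall j : 'I_n, ((bump v (s i) == u) && (j < i)) ==> (m <= bump v (s j))].
Proof.
move=> Huv; apply/idP/idP.
  move=> /forallP H; apply/forallP => i; apply/forallP => j.
  by have := forallP (H (lift ord_max i)) (lift ord_max j); rewrite !LPl !lift_max.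
move=> /forallP H; apply/forallP => i; apply/forallP => j.
case: (unliftP ord_max i) => [i'|] ->; last by rewrite LPm; apply/implyP => /andP [/eqP E _]; move: Huv; rewrite -E eqxx.
case: (unliftP ord_max j) => [j'|] ->; last first.
  apply/implyP => /andP [_ H']; move: H'; rewrite lift_max /=.
  by move: (ltn_ord i') => /= ?; lia.
by have := forallP (H i') j'; rewrite !LPl !lift_max.
Qed.

Lemma firstE_lift_top n (s : 'S_n) (v : 'I_n.+1) m :
  firstE (LP v s) v m = [forall j : 'I_n, m <= bump v (s j)].
Proof.
apply/idP/idP.
  move=> /forallP H; apply/forallP => j.
  have := forallP (H ord_max) (lift ord_max j); rewrite LPm LPl lift_max eqxx /=.
  by rewrite ltn_ord.
move=> /forallP H; apply/forallP => i; apply/forallP => j.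
case: (unliftP ord_max i) => [i'|] ->.
  rewrite LPl; apply/implyP => /andP [/eqP E _].
  by move: (neq_bump v (s i')); rewrite E eqxx.
case: (unliftP ord_max j) => [j'|] ->; last by rewrite ltnn andbF.
by rewrite LPl; apply/implyP => _; apply: H.
Qed.

Lemma firstE1 n (s : 'S_n) : firstE s 0 1.
Proof.
apply/forallP => i; apply/forallP => j; apply/implyP => /andP [/eqP Hi Hji].
rewrite lt0n; apply/negP => /eqP Hj.
have : s i = s j by apply: val_inj; rewrite /= Hi Hj.
by move/perm_inj => E; move: Hji; rewrite E ltnn.
Qed.

Lemma LC21_top n (s : 'S_n) (v : nat) L : v = L.-1 -> LCo ltn s v L.
Proof.
move=> ->; apply/forallP => i; apply/forallP => j; apply/implyP => /and3P [_ _ Hj].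
by rewrite /= bump_lt_self.
Qed.

Lemma LC21_eq n (s : 'S_n) (v : nat) L : v < L.-1 -> L <= n.+1 ->
  LCo ltn s v L = (v.+2 == L) && firstE s L.-2 L.-1.
Proof.
move=> Hv HL.
have Hb : L.-2 < n by lia.
have Hva : v < n by lia.
have [a Ha] := exists_pos s Hva.
have [b Hb'] := exists_pos s Hb.
apply/idP/andP.
  move=> H.
  have Hx : forall i j : 'I_n, i < j -> s i < L.-1 -> s j < L.-1 -> s j < v.
    move=> i j Hij Hi Hj; have := forallP (forallP H i) j.
    by rewrite Hij Hi Hj /= bump_lt_self.
  have HvL : v.+2 == L.
    apply/eqP; case: (ltngtP a b) => Hab.
    - have := Hx a b Hab; rewrite Ha Hb'; lia.
    - have := Hx b a Hab; rewrite Ha Hb'; lia.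
    - have E : a = b by apply: val_inj.
      by move: Ha; rewrite E Hb'; lia.
  split => //.
  apply/forallP => i; apply/forallP => j; apply/implyP => /andP [/eqP Hi Hji].
  rewrite leqNgt; apply/negP => Hj.
  have := Hx j i Hji Hj; rewrite Hi; lia.
move=> [/eqP HvL /forallP Hf].
apply/forallP => i; apply/forallP => j; apply/implyP => /and3P [Hij Hi Hj].
rewrite /= bump_lt_self.
have : (s j != L.-2 :> nat).
  apply/negP => /eqP E.
  have := forallP (Hf j) i; rewrite E eqxx Hij /=; lia.
move/eqP; lia.
Qed.

Lemma LC12_bot n (s : 'S_n) L : LCo gtr s 0 L.
Proof.
apply/forallP => i; apply/forallP => j; apply/implyP => _.
by rewrite /gtr bump_gt_self.
Qed.

Lemma LC12_eq n (s : 'S_n) (v : nat) L : 0 < v -> v < L -> L <= n.+1 ->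
  LCo gtr s v L = (v == 1) && firstE s 0 L.-1.
Proof.
move=> Hv0 Hv HL.
apply/idP/andP.
  move=> H.
  have Hx : forall i j : 'I_n, i < j -> s i < L.-1 -> s j < L.-1 -> v <= s j.
    move=> i j Hij Hi Hj; have := forallP (forallP H i) j.
    by rewrite Hij Hi Hj /= /gtr bump_gt_self.
  have Hv1 : v == 1.
    case: (leqP v 1) => Hv1; first by apply/eqP; lia.
    have Ha0 : 0 < n by lia.
    have Hb1 : 1 < n by lia.
    have [a Ha] := exists_pos s Ha0.
    have [b Hb] := exists_pos s Hb1.
    case: (ltngtP a b) => Hab.
    - have := Hx a b Hab; rewrite Ha Hb; lia.
    - have := Hx b a Hab; rewrite Ha Hb; lia.
    - have E : a = b by apply: val_inj.
      by move: Ha; rewrite E Hb.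
  split => //.
  apply/forallP => i; apply/forallP => j; apply/implyP => /andP [/eqP Hi Hji].
  rewrite leqNgt; apply/negP => Hj.
  have := Hx j i Hji Hj; rewrite Hi; lia.
move=> [/eqP Hv1 /forallP Hf].
apply/forallP => i; apply/forallP => j; apply/implyP => /and3P [Hij Hi Hj].
rewrite /gtr bump_gt_self Hv1 lt0n.
apply/negP => /eqP E.
have := forallP (Hf j) i; rewrite E eqxx Hij /=; lia.
Qed.

Definition Nc ord n h := #|[set s : 'S_n | inwin h s && validR ord h s]|.
Definition Ac ord n h u m := #|[set s : 'S_n | [&& inwin h s, validR ord h s & firstE s u m]]|.

Lemma card_set_false n (P : pred 'S_n) : (forall s, P s = false) -> #|[set s | P s]| = 0.
Proof. by move=> H; apply/eqP; rewrite cards_eq0; apply/eqP/setP => s; rewrite !inE H. Qed.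
Lemma card_set_eq n (P Q : pred 'S_n) : (forall s, P s = Q s) -> #|[set s | P s]| = #|[set s | Q s]|.
Proof. by move=> H; apply: eq_card => s; rewrite !inE H. Qed.

Lemma split_gen ord n h (X : pred 'S_n.+1) :
  (forall v a b, ord (bump v a) (bump v b) = ord a b) -> mono h ->
  #|[set t : 'S_n.+1 | [&& inwin h t, validR ord h t & X t]]| =
  \sum_(v < n.+1) #|[set s : 'S_n | [&& v < h n, inwin (hm h) s, validR ord (hm h) s,
                                      LCo ord s v (h n) & X (LP v s)]]|.
Proof.
move=> Ho Hm.
rewrite (card_perm_split (fun t => [&& inwin h t, validR ord h t & X t])).
apply: eq_bigr => v _; apply: card_set_eq => s /=.
rewrite inwin_lift //; case: (ltnP v (h n)) => Hv //=.
by rewrite valid_lift // -!andbA.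
Qed.

Lemma sum_ind n a (X : nat) :
  \sum_(v < n.+1) (((v : nat) == a) * X) = (a < n.+1) * X.
Proof.
case: (ltnP a n.+1) => Ha.
  rewrite (bigD1 (Ordinal Ha)) //= eqxx mul1n big1 ?addn0 // => v Hv.
  have -> : ((v : nat) == a) = false.
    by apply/negbTE; apply: contra Hv => /eqP E; apply/eqP/val_inj.
  by rewrite mul0n.
rewrite mul0n big1 // => v _.
have -> : ((v : nat) == a) = false by apply/negbTE; move: (ltn_ord v); lia.
by [].
Qed.

Lemma sum_two n a b (X Y : nat) :
  \sum_(v < n.+1) (((v : nat) == a) * X + ((v : nat) == b) * Y) = (a < n.+1) * X + (b < n.+1) * Y.
Proof. by rewrite big_split /= !sum_ind. Qed.

Lemma F21d N h (t : 'S_N) L m : validR ltn h t -> firstE t L.-1 L -> firstE t m.-1 m ->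
  2 <= m -> m < L -> L <= N -> (forall k : 'I_N, L <= h k) -> False.
Proof.
move=> /forallP Hv /forallP HL /forallP Hm H2 HmL HLN Hh.
have Hp0 : L.-1 < N by lia.
have [p Hp] := exists_pos t Hp0.
have Hq0 : m.-1 < N by lia.
have [q Hq] := exists_pos t Hq0.
have Hr0 : m.-2 < N by lia.
have [r Hr] := exists_pos t Hr0.
have Hqr : q < r.
  case: (ltngtP q r) => H.
  - by [].
  - by have := forallP (Hm q) r; rewrite Hq eqxx H Hr /=; lia.
  - have E : q = r by apply: val_inj.
    by move: Hq; rewrite E Hr; lia.
have Hpq : p < q.
  case: (ltngtP p q) => H.
  - by [].
  - by have := forallP (HL p) q; rewrite Hp eqxx H Hq /=; lia.
  - have E : p = q by apply: val_inj.
    by move: Hp; rewrite E Hq; lia.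
have := forallP (forallP (Hv p) q) r.
rewrite Hpq Hqr Hp Hq Hr /=.
have := Hh r; lia.
Qed.

Lemma bump_eq_low v x w : w < v -> (bump v x == w) = (x == w).
Proof. by rewrite /bump; case: (leqP v x) => H /= Hw; apply/eqP/eqP => E; lia. Qed.
Lemma bump_ge_low v x t : t <= v -> (t <= bump v x) = (t <= x).
Proof. by rewrite /bump; case: (leqP v x) => H /= Hw; lia. Qed.
Lemma bump_eq_S v x : (bump v x == v.+1) = (x == v).
Proof. by rewrite /bump; case: (leqP v x) => H /=; apply/eqP/eqP => E; lia. Qed.
Lemma bump_ge_SS v x : (v.+2 <= bump v x) = (v.+1 <= x).
Proof. by rewrite /bump; case: (leqP v x) => H /=; lia. Qed.

Lemma F21a n (s : 'S_n) (v : 'I_n.+1) m : 0 < m -> m <= v ->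
  firstE (LP v s) m.-1 m = firstE s m.-1 m.
Proof.
move=> H0 Hm; rewrite firstE_lift; last by apply/eqP; lia.
apply: eq_forallb => i; apply: eq_forallb => j.
by rewrite bump_eq_low ?bump_ge_low //; lia.
Qed.

Lemma F21c n (s : 'S_n) (v : 'I_n.+1) :
  firstE (LP v s) v.+1 v.+2 = firstE s v v.+1.
Proof.
rewrite firstE_lift; last by apply/eqP; lia.
apply: eq_forallb => i; apply: eq_forallb => j.
by rewrite bump_eq_S bump_ge_SS.
Qed.

Lemma N21_v n h (v : 'I_n.+1) : mono h -> 0 < h n -> h n <= n.+1 ->
  #|[set s : 'S_n | [&& v < h n, inwin (hm h) s, validR ltn (hm h) s, LCo ltn s v (h n) & true]]|
  = ((v:nat) == (h n).-1) * Nc ltn n (hm h)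
    + ((v:nat) == (h n).-2) * ((1 < h n) * Ac ltn n (hm h) (h n).-2 (h n).-1).
Proof.
move=> Hm H0 HL.
case: (ltnP v (h n)) => Hv; last first.
  rewrite card_set_false => [|s] //.
  have -> : ((v:nat) == (h n).-1) = false by apply/negbTE/eqP; lia.
  have -> : ((v:nat) == (h n).-2) = false by apply/negbTE/eqP; lia.
  by [].
case: (eqVneq (v:nat) (h n).-1) => E1.
  rewrite (@card_set_eq _ _ (fun s => inwin (hm h) s && validR ltn (hm h) s)); last first.
    by move=> s; rewrite (LC21_top s E1) /= !andbT.
  case: (ltnP 1 (h n)) => H1; last by rewrite /Nc mul1n mul0n muln0 addn0.
  have -> : ((v:nat) == (h n).-2) = false by apply/negbTE/eqP; lia.
  by rewrite /Nc mul1n mul0n addn0.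
have Hv' : v < (h n).-1 by move/eqP: E1; lia.
rewrite mul0n add0n.
case: (eqVneq (v:nat) (h n).-2) => E2.
  rewrite (@card_set_eq _ _ (fun s => [&& inwin (hm h) s, validR ltn (hm h) s &
                                        firstE s (h n).-2 (h n).-1])); last first.
    move=> s; rewrite LC21_eq //.
    have -> : (v.+2 == h n) by apply/eqP; lia.
    by rewrite /= andbT.
  have -> : 1 < h n by lia.
  by rewrite /Ac !mul1n.
rewrite mul0n card_set_false // => s.
rewrite LC21_eq //.
have -> : (v.+2 == h n) = false by apply/negbTE/eqP; move/eqP: E2; lia.
by rewrite /= !andbF.
Qed.

Lemma A21_v n h (v : 'I_n.+1) m : mono h -> 2 <= m -> m <= h n -> h n <= n.+1 ->
  #|[set s : 'S_n | [&& v < h n, inwin (hm h) s, validR ltn (hm h) s, LCo ltn s v (h n)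
                       & firstE (LP v s) m.-1 m]]|
  = ((v:nat) == (h n).-1) * ((m < h n) * Ac ltn n (hm h) m.-1 m)
    + ((v:nat) == (h n).-2) * ((m == h n) * Ac ltn n (hm h) (h n).-2 (h n).-1).
Proof.
move=> Hm H2 HmL HL.
case: (ltnP v (h n)) => Hv; last first.
  rewrite card_set_false => [|s] //.
  have -> : ((v:nat) == (h n).-1) = false by apply/negbTE/eqP; lia.
  have -> : ((v:nat) == (h n).-2) = false by apply/negbTE/eqP; lia.
  by [].
case: (eqVneq (v:nat) (h n).-1) => E1.
  have -> : ((v:nat) == (h n).-2) = false by apply/negbTE/eqP; lia.
  rewrite mul1n mul0n addn0.
  case: (ltnP m (h n)) => Hml.
    rewrite mul1n /Ac; apply: card_set_eq => s.
    by rewrite (LC21_top s E1) F21a //=; lia.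
  rewrite mul0n card_set_false // => s.
  have Hb : (h n).-2 < n by lia.
  have [a Ha] := exists_pos s Hb.
  have -> : m.-1 = v by lia.
  rewrite firstE_lift_top.
  have -> : [forall j, m <= bump v (s j)] = false.
    apply/negbTE/negP => /forallP H; have := H a; rewrite /bump Ha.
    by case: leqP => /= ?; lia.
  by rewrite !andbF.
case: (eqVneq (v:nat) (h n).-2) => E2; last first.
  rewrite card_set_false => [|s]; last first.
    rewrite LC21_eq //; last by move/eqP: E1; lia.
    have -> : (v.+2 == h n) = false by apply/negbTE/eqP; move/eqP: E2; lia.
    by rewrite /= !andbF.
  by [].
have HL2 : 1 < h n by move/eqP: E1; lia.
have Hv' : v < (h n).-1 by lia.
rewrite mul0n add0n mul1n.
case: (eqVneq m (h n)) => Em.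
  rewrite mul1n /Ac; apply: card_set_eq => s.
  have -> : m.-1 = v.+1 by lia.
  have -> : m = v.+2 by lia.
  rewrite F21c LC21_eq //.
  have -> : (v.+2 == h n) by apply/eqP; lia.
  have -> : v.+1 = (h n).-1 by lia.
  rewrite E2 /=.
  by case: (firstE s (h n).-2 (h n).-1); rewrite ?andbF ?andbT.
rewrite mul0n card_set_false // => s.
apply/negbTE/negP => /and5P [_ Hin Hval HLC HX].
have Vt : validR ltn h (LP v s) by rewrite (@valid_lift ltn n h s v hord21 Hm Hv) Hval HLC.
move: HLC; rewrite LC21_eq // => /andP [_ Hf].
have FL : firstE (LP v s) v.+1 v.+2.
  by rewrite F21c; have -> : (v : nat) = (h n).-2 by []; have -> : (h n).-2.+1 = (h n).-1 by lia.
have E3 : v.+1 = (h n).-1 by lia.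
have E4 : v.+2 = h n by lia.
rewrite E4 E3 in FL.
apply: (F21d Vt FL HX H2 _ HL) => [|k]; first by move/eqP: Em; lia.
by apply: Hm; move: (ltn_ord k); lia.
Qed.

Lemma N12_v n h (v : 'I_n.+1) : mono h -> 0 < h n -> h n <= n.+1 ->
  #|[set s : 'S_n | [&& v < h n, inwin (hm h) s, validR gtr (hm h) s, LCo gtr s v (h n) & true]]|
  = ((v:nat) == 0) * Nc gtr n (hm h)
    + ((v:nat) == 1) * ((1 < h n) * Ac gtr n (hm h) 0 (h n).-1).
Proof.
move=> Hm H0 HL.
case: (ltnP v (h n)) => Hv; last first.
  rewrite card_set_false => [|s] //.
  have -> : ((v:nat) == 0) = false by apply/negbTE/eqP; lia.
  case: (ltnP 1 (h n)) => H1; last by rewrite !muln0.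
  have -> : ((v:nat) == 1) = false by apply/negbTE/eqP; lia.
  by [].
case: (eqVneq (v:nat) 0) => E0.
  have -> : ((v:nat) == 1) = false by rewrite E0.
  rewrite mul1n mul0n addn0 /Nc; apply: card_set_eq => s.
  by rewrite E0 LC12_bot /= andbT.
rewrite mul0n add0n.
have Hv0 : 0 < v by rewrite lt0n.
case: (eqVneq (v:nat) 1) => E1.
  have -> : 1 < h n by lia.
  rewrite !mul1n /Ac; apply: card_set_eq => s.
  by rewrite LC12_eq // E1 eqxx /= andbT.
rewrite mul0n card_set_false // => s.
by rewrite LC12_eq // (negbTE E1) /= !andbF.
Qed.

Lemma F12b n (s : 'S_n) (v : 'I_n.+1) L m : (v : nat) = 1 -> firstE s 0 L.-1 ->
  2 <= L -> m <= L -> firstE (LP v s) 0 m.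
Proof.
move=> Ev /forallP Hf H2 HmL.
rewrite firstE_lift; last by rewrite Ev.
apply/forallP => i; apply/forallP => j; apply/implyP => /andP [Hi Hji].
move: Hi; rewrite bump_eq_low ?Ev // => Hi.
have := forallP (Hf i) j; rewrite Hi Hji /= => H.
by rewrite /bump; case: leqP => /= ?; lia.
Qed.

Lemma A12_v n h (v : 'I_n.+1) m : mono h -> 2 <= m -> m <= h n -> h n <= n.+1 ->
  #|[set s : 'S_n | [&& v < h n, inwin (hm h) s, validR gtr (hm h) s, LCo gtr s v (h n)
                       & firstE (LP v s) 0 m]]|
  = ((v:nat) == 1) * Ac gtr n (hm h) 0 (h n).-1.
Proof.
move=> Hm H2 HmL HL.
case: (ltnP v (h n)) => Hv; last first.
  rewrite card_set_false => [|s] //.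
  have -> : ((v:nat) == 1) = false by apply/negbTE/eqP; lia.
  by [].
case: (eqVneq (v:nat) 0) => E0.
  have -> : ((v:nat) == 1) = false by apply/negbTE/eqP; lia.
  rewrite mul0n card_set_false // => s.
  have Hb : 0 < n by lia.
  have [a Ha] := exists_pos s Hb.
  rewrite -[X in firstE _ X _]E0 firstE_lift_top.
  have -> : [forall j, m <= bump v (s j)] = false.
    apply/negbTE/negP => /forallP H; have := H a; rewrite /bump Ha E0.
    by move=> /=; lia.
  by rewrite !andbF.
have Hv0 : 0 < v by rewrite lt0n.
case: (eqVneq (v:nat) 1) => E1.
  rewrite mul1n /Ac; apply: card_set_eq => s.
  rewrite LC12_eq // E1 eqxx /=.
  case Hf: (firstE s 0 (h n).-1); rewrite ?andbF //=.
  by rewrite (F12b E1 Hf) ?andbT //; lia.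
rewrite mul0n card_set_false // => s.
by rewrite LC12_eq // (negbTE E1) /= !andbF.
Qed.

Lemma Nrec21 n h : mono h -> 0 < h n -> h n <= n.+1 ->
  Nc ltn n.+1 h = Nc ltn n (hm h) + (1 < h n) * Ac ltn n (hm h) (h n).-2 (h n).-1.
Proof.
move=> Hm H0 HL.
rewrite /Nc (@card_set_eq _ _ (fun t => [&& inwin h t, validR ltn h t & true])); last first.
  by move=> t; rewrite andbT.
rewrite split_gen //; last exact: hord21.
rewrite (eq_bigr (fun v : 'I_n.+1 => ((v:nat) == (h n).-1) * Nc ltn n (hm h)
    + ((v:nat) == (h n).-2) * ((1 < h n) * Ac ltn n (hm h) (h n).-2 (h n).-1))); last first.
  by move=> v _; exact: N21_v.
rewrite sum_two.
have -> : (h n).-1 < n.+1 by lia.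
have -> : (h n).-2 < n.+1 by lia.
by rewrite !mul1n.
Qed.

Lemma Nrec12 n h : mono h -> 0 < h n -> h n <= n.+1 ->
  Nc gtr n.+1 h = Nc gtr n (hm h) + (1 < h n) * Ac gtr n (hm h) 0 (h n).-1.
Proof.
move=> Hm H0 HL.
rewrite /Nc (@card_set_eq _ _ (fun t => [&& inwin h t, validR gtr h t & true])); last first.
  by move=> t; rewrite andbT.
rewrite split_gen //; last exact: hord12.
rewrite (eq_bigr (fun v : 'I_n.+1 => ((v:nat) == 0) * Nc gtr n (hm h)
    + ((v:nat) == 1) * ((1 < h n) * Ac gtr n (hm h) 0 (h n).-1))); last first.
  by move=> v _; exact: N12_v.
rewrite sum_two.
have -> : 0 < n.+1 by lia.
rewrite mul1n; case: (ltnP 1 (h n)) => H1; last by rewrite !mul0n muln0.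
have -> : 1 < n.+1 by lia.
by rewrite mul1n.
Qed.

Lemma Arec21 n h m : mono h -> 2 <= m -> m <= h n -> h n <= n.+1 ->
  Ac ltn n.+1 h m.-1 m = (m < h n) * Ac ltn n (hm h) m.-1 m
                          + (m == h n) * Ac ltn n (hm h) (h n).-2 (h n).-1.
Proof.
move=> Hm H2 HmL HL.
rewrite /Ac (split_gen (fun t => firstE t m.-1 m)) //; last exact: hord21.
rewrite (eq_bigr (fun v : 'I_n.+1 => ((v:nat) == (h n).-1) * ((m < h n) * Ac ltn n (hm h) m.-1 m)
    + ((v:nat) == (h n).-2) * ((m == h n) * Ac ltn n (hm h) (h n).-2 (h n).-1))); last first.
  by move=> v _; exact: A21_v.
rewrite sum_two.
have -> : (h n).-1 < n.+1 by lia.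
have -> : (h n).-2 < n.+1 by lia.
by rewrite !mul1n.
Qed.

Lemma Arec12 n h m : mono h -> 2 <= m -> m <= h n -> h n <= n.+1 ->
  Ac gtr n.+1 h 0 m = Ac gtr n (hm h) 0 (h n).-1.
Proof.
move=> Hm H2 HmL HL.
rewrite /Ac (split_gen (fun t => firstE t 0 m)) //; last exact: hord12.
rewrite (eq_bigr (fun v : 'I_n.+1 => ((v:nat) == 1) * Ac gtr n (hm h) 0 (h n).-1)); last first.
  by move=> v _; exact: A12_v.
rewrite sum_ind.
have -> : 1 < n.+1 by lia.
by rewrite mul1n.
Qed.

Lemma A12_const n h m m' : mono h -> h 0 <= n -> 2 <= m -> m <= m' -> m' <= h n.-1 ->
  Ac gtr n h 0 m = Ac gtr n h 0 m'.
Proof.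
move=> Hm Hh0 H2 Hmm Hm'.
have Hhn : h n.-1 <= h 0 by apply: Hm.
rewrite /Ac; apply: card_set_eq => s.
case Hin: (inwin h s) => //=; case Hval: (validR gtr h s) => //=.
apply/idP/idP => /forallP H; apply/forallP => i; apply/forallP => j;
  apply/implyP => /andP [/eqP Hi Hji].
  rewrite leqNgt; apply/negP => Hj.
  have Hb1 : 1 < n by lia.
  have [b Hb] := exists_pos s Hb1.
  have Hib : i < b.
    case: (ltngtP i b) => Hib.
    - by [].
    - by have := forallP (H i) b; rewrite Hi eqxx Hib Hb /=; lia.
    - have E : i = b by apply: val_inj.
      by move: Hi; rewrite E Hb.
  have Hhb : h n.-1 <= h b by apply: Hm; move: (ltn_ord b); lia.
  move: (forallP (forallP (forallP Hval j) i) b) => /implyP H'.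
  have Hc : [&& j < i, i < b, s j < h b, s i < h b & s b < h b].
    by apply/and5P; split => //; lia.
  by have := H' Hc; rewrite /gtr Hi Hb.
have := forallP (H i) j; rewrite Hi eqxx Hji /=; lia.
Qed.

Lemma validR0 ord h (s : 'S_0) : validR ord h s.
Proof. by apply/forallP => -[]. Qed.
Lemma inwin0 h (s : 'S_0) : inwin h s.
Proof. by apply/forallP => -[]. Qed.
Lemma firstE0 (s : 'S_0) u m : firstE s u m.
Proof. by apply/forallP => -[]. Qed.

Lemma mono_hm h : mono h -> mono (hm h).
Proof. by move=> Hm i j Hij; rewrite /hm; have := Hm i j Hij; lia. Qed.

Lemma Nc_A1 ord n h : Ac ord n h 0 1 = Nc ord n h.
Proof. by rewrite /Ac /Nc; apply: card_set_eq => s; rewrite firstE1 andbT. Qed.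

Lemma core n : forall h, mono h -> h 0 <= n ->
  Nc ltn n h = Nc gtr n h /\
  (forall m, 0 < m -> m <= h n.-1 -> Ac ltn n h m.-1 m = Ac gtr n h 0 m).
Proof.
elim: n => [|n IH] h Hm Hh0.
  split.
    by rewrite /Nc; apply: card_set_eq => s; rewrite !validR0.
  move=> m _ _; rewrite /Ac; apply: card_set_eq => s; by rewrite !validR0 !firstE0.
have Hh0' : hm h 0 <= n by rewrite /hm; lia.
have [IHN IHA] := IH (hm h) (mono_hm Hm) Hh0'.
have Hhn : h n <= h 0 by apply: Hm.
case: (posnP (h n)) => H0.
  have Z : forall ord, Nc ord n.+1 h = 0.
    move=> ord; rewrite /Nc card_set_false // => s.
    apply/negbTE/negP => /andP [/forallP Hin _].
    by have := Hin ord_max; rewrite H0.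
  by split; [rewrite !Z | move=> m /=; lia].
have HL : h n <= n.+1 by lia.
have HNn : h n <= h n.-1 by apply: Hm; lia.
have HN : Nc ltn n.+1 h = Nc gtr n.+1 h.
  rewrite Nrec21 // Nrec12 // IHN.
  case: (ltnP 1 (h n)) => H1; last by rewrite !mul0n.
  rewrite (IHA (h n).-1) //; first by lia.
  by rewrite /hm; lia.
split => // m Hm0 HmL; rewrite /= in HmL.
case: (ltnP 1 m) => Hm1; last first.
  have -> : m = 1 by lia.
  by rewrite Nc_A1 Nc_A1.
rewrite Arec21 // Arec12 //.
case: (eqVneq m (h n)) => Emn.
  rewrite Emn ltnn mul0n mul1n add0n.
  rewrite (IHA (h n).-1) //; first by lia.
  by rewrite /hm; lia.
have Hlt : m < h n by move/eqP: Emn; lia.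
rewrite Hlt mul1n mul0n addn0.
rewrite (IHA m) //; last by rewrite /hm; lia.
apply: (A12_const (mono_hm Hm)) => //; rewrite /hm; lia.
Qed.
Lemma card_prefix n k : k <= n -> #|[set i : 'I_n | i < k]| = k.
Proof.
move=> Hk.
have -> : [set i : 'I_n | i < k] = [set widen_ord Hk j | j : 'I_k].
  apply/setP => i; rewrite inE; apply/idP/imsetP.
    by move=> Hi; exists (Ordinal Hi) => //; apply: val_inj.
  by move=> [j _ ->] /=.
rewrite card_imset ?card_ord //.
by move=> a b /(congr1 val) /= E; apply: val_inj.
Qed.

Lemma sort_inj m n (g : 'I_m -> 'I_n) : injective g ->
  exists r : {ffun 'I_m -> 'I_n}, exists s : 'S_m,
    [/\ (forall a b : 'I_m, a < b -> r a < r b),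
        (forall b, g b = r (s b)) &
        (forall a b, g a < g b -> s a < s b)].
Proof.
move=> Hg.
pose rk b := #|[set a | g a < g b]|.
have rk_lt : forall b, rk b < m.
  move=> b; rewrite -[X in _ < X](card_ord m) -cardsT; apply: proper_card.
  rewrite properT; apply/negP => /eqP E.
  have : b \in [set a | g a < g b] by rewrite E inE.
  by rewrite inE ltnn.
have rk_mono : forall a b, g a < g b -> rk a < rk b.
  move=> a b Hab; apply: proper_card; apply/properP; split.
    by apply/subsetP => x; rewrite !inE => Hx; apply: ltn_trans Hab.
  by exists a; rewrite !inE ?ltnn.
pose sf b := Ordinal (rk_lt b).
have sf_inj : injective sf.
  move=> a b /(congr1 val) /= E; case: (eqVneq a b) => // Hne.
  have Hne' : g a != g b by apply: contra_neq Hne => /Hg.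
  case: (ltngtP (g a) (g b)) => H.
  - by have := rk_mono _ _ H; rewrite E ltnn.
  - by have := rk_mono _ _ H; rewrite E ltnn.
  - by move: Hne'; rewrite (val_inj H) eqxx.
pose s := perm sf_inj.
have sE : forall b, s b = sf b by move=> b; rewrite permE.
have refl : forall a b, g a < g b -> s a < s b.
  by move=> a b H; rewrite !sE /=; apply: rk_mono.
exists [ffun x => g (s^-1 x)%g], s; split => //.
  move=> a b Hab; rewrite !ffunE.
  set x := (s^-1 a)%g; set y := (s^-1 b)%g.
  case: (ltngtP (g x) (g y)) => H //.
  - have := refl _ _ H; rewrite /x /y !permKV => H'.
    by move: (ltn_trans H' Hab); rewrite ltnn.
  - have E : x = y by apply: Hg; apply: val_inj.
    by move: Hab; rewrite -(permKV s a) -(permKV s b) -/x -/y E ltnn.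
by move=> b; rewrite ffunE permK.
Qed.

Definition hh n (lam : 'I_n -> nat) (c : nat) := #|[set i : 'I_n | c < lam i]|.

Lemma keyF n (lam : 'I_n -> nat) (Hl : forall i j : 'I_n, i <= j -> lam j <= lam i)
  (r : 'I_n) c : (c < lam r) = (r < hh lam c).
Proof.
apply/idP/idP => H.
  have : [set i : 'I_n | i < r.+1] \subset [set i | c < lam i].
    apply/subsetP => i; rewrite !inE => Hi.
    by apply: (leq_trans H); apply: Hl; lia.
  by move/subset_leq_card; rewrite card_prefix //; apply: ltn_ord.
rewrite ltnNge; apply/negP => Hle.
have : [set i | c < lam i] \subset [set i : 'I_n | i < r].
  apply/subsetP => i; rewrite !inE => Hi.
  rewrite ltnNge; apply/negP => Hri.
  by have := Hl _ _ Hri; lia.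
move/subset_leq_card; rewrite card_prefix; first by move=> H'; move: (leq_ltn_trans H' H); rewrite /hh ltnn.
by apply: ltnW.
Qed.

Lemma hh_mono n (lam : 'I_n -> nat) : mono (hh lam).
Proof.
move=> c c' Hc; apply: subset_leq_card; apply/subsetP => i; rewrite !inE => Hi.
by apply: leq_ltn_trans Hi.
Qed.

Lemma hh0 n (lam : 'I_n -> nat) : hh lam 0 <= n.
Proof. by rewrite /hh -[X in _ <= X](card_ord n); apply: max_card. Qed.

Lemma pop_gen m n (lam : 'I_n -> nat) (Hl : forall i j : 'I_n, i <= j -> lam j <= lam i)
  (P : rel 'I_m) (R : 'S_n) :
  pop_contains P lam (R^-1)%g =
  [exists c : {ffun 'I_m -> 'I_n}, [forall a : 'I_m, forall b : 'I_m,
     [&& (a < b) ==> (c a < c b), R (c a) < hh lam (c b) & P a b ==> (R (c a) < R (c b))]]].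
Proof.
rewrite /pop_contains invgK; apply/existsP/existsP.
  move=> [r /existsP [c /existsP [s /andP [/forallP H1 /forallP H2]]]].
  exists c; apply/forallP => a; apply/forallP => b.
  have Ea : R (c a) = r (s a) by apply/eqP: (H2 a).
  have Eb : R (c b) = r (s b) by apply/eqP: (H2 b).
  apply/and3P; split.
  - by have /and4P [_ ? _ _] := forallP (H1 a) b.
  - by have /and4P [_ _ Hf _] := forallP (H1 (s a)) b; rewrite Ea -keyF.
  - apply/implyP => Hp.
    have /and4P [_ _ _ /implyP Hs] := forallP (H1 a) b.
    have /and4P [/implyP Hr _ _ _] := forallP (H1 (s a)) (s b).
    by rewrite Ea Eb; apply: Hr; apply: Hs.
move=> [c /forallP H].
have Hc : forall a b : 'I_m, a < b -> c a < c b.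
  by move=> a b Hab; have /and3P [/implyP Hc _ _] := forallP (H a) b; apply: Hc.
have ginj : injective (fun b => R (c b)).
  move=> a b /perm_inj E.
  case: (ltngtP a b) => Hab.
  - by have := Hc _ _ Hab; rewrite E ltnn.
  - by have := Hc _ _ Hab; rewrite E ltnn.
  - by apply: val_inj.
have [r [s [Hr Hg Hs]]] := sort_inj ginj.
exists r; apply/existsP; exists c; apply/existsP; exists s; apply/andP; split.
  apply/forallP => a; apply/forallP => b; apply/and4P; split.
  - by apply/implyP; exact: Hr.
  - by apply/implyP; exact: Hc.
  - have Ex : R (c (s^-1 a)%g) = r a by rewrite (Hg (s^-1 a)%g) permKV.
    have /and3P [_ Hf _] := forallP (H (s^-1 a)%g) b.
    by rewrite keyF // -Ex.
  - apply/implyP => Hp; apply: Hs.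
    by have /and3P [_ _ /implyP Hx] := forallP (H a) b; apply: Hx.
by apply/forallP => b; apply/eqP; exact: Hg.
Qed.

Notation o0 := (@Ordinal 3 0 isT).
Notation o1 := (@Ordinal 3 1 isT).
Notation o2 := (@Ordinal 3 2 isT).

Lemma exists21 n (lam : 'I_n -> nat) (Hl : forall i j : 'I_n, i <= j -> lam j <= lam i)
  (R : 'S_n) :
  [exists c : {ffun 'I_3 -> 'I_n}, [forall a : 'I_3, forall b : 'I_3,
     [&& (a < b) ==> (c a < c b), R (c a) < hh lam (c b) & pop_p a b ==> (R (c a) < R (c b))]]]
  = ~~ validR ltn (hh lam) R.
Proof.
apply/idP/idP.
  move=> /existsP [c /forallP H]; apply/negP => /forallP V.
  have := forallP (H o0) o1; rewrite /= => /and3P [H01 _ _].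
  have := forallP (H o1) o2; rewrite /= => /and3P [H12 F12 _].
  have := forallP (H o0) o2; rewrite /= => /and3P [_ F02 _].
  have := forallP (H o2) o2; rewrite /= => /andP [F22 _].
  have := forallP (H o2) o1; rewrite /= /pop_p /= => /andP [_ P21].
  have := forallP (forallP (V (c o0)) (c o1)) (c o2).
  by rewrite H01 H12 F02 F12 F22 /=; lia.
move/forallPn => [i /forallPn [j /forallPn [k]]].
rewrite negb_imply => /andP [/and5P [Hij Hjk Hi Hj Hk] Hn].
apply/existsP.
have Hjk' : R j != R k.
  by apply/negP => /eqP /perm_inj E; move: Hjk; rewrite E ltnn.
have Hkj : R k < R j by rewrite ltn_neqAle eq_sym Hjk' /= leqNgt.
have Hhj : hh lam k <= hh lam j by apply: hh_mono; lia.
have Hhi : hh lam j <= hh lam i by apply: hh_mono; lia.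
exists [ffun b : 'I_3 => if val b == 0 then i else if val b == 1 then j else k].
apply/forallP => -[[|[|[|a]]] Ha]; apply/forallP => -[[|[|[|b]]] Hb];
  rewrite !ffunE /= /pop_p /=; try (exfalso; lia);
  try (apply/and3P; split => //; lia); try (apply/andP; split => //; lia).
Qed.

Lemma exists12 n (lam : 'I_n -> nat) (Hl : forall i j : 'I_n, i <= j -> lam j <= lam i)
  (R : 'S_n) :
  [exists c : {ffun 'I_3 -> 'I_n}, [forall a : 'I_3, forall b : 'I_3,
     [&& (a < b) ==> (c a < c b), R (c a) < hh lam (c b) & pop_p' a b ==> (R (c a) < R (c b))]]]
  = ~~ validR gtr (hh lam) R.
Proof.
apply/idP/idP.
  move=> /existsP [c /forallP H]; apply/negP => /forallP V.
  have := forallP (H o0) o1; rewrite /= => /and3P [H01 _ _].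
  have := forallP (H o1) o2; rewrite /= /pop_p' /= => /and3P [H12 F12 P12].
  have := forallP (H o0) o2; rewrite /= => /and3P [_ F02 _].
  have := forallP (H o2) o2; rewrite /= => /andP [F22 _].
  have := forallP (forallP (V (c o0)) (c o1)) (c o2).
  by rewrite H01 H12 F02 F12 F22 /= /gtr; lia.
move/forallPn => [i /forallPn [j /forallPn [k]]].
rewrite negb_imply => /andP [/and5P [Hij Hjk Hi Hj Hk] Hn].
apply/existsP.
have Hjk' : R j != R k.
  by apply/negP => /eqP /perm_inj E; move: Hjk; rewrite E ltnn.
have Hkj : R j < R k by rewrite ltn_neqAle Hjk' /= leqNgt.
have Hhj : hh lam k <= hh lam j by apply: hh_mono; lia.
have Hhi : hh lam j <= hh lam i by apply: hh_mono; lia.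
exists [ffun b : 'I_3 => if val b == 0 then i else if val b == 1 then j else k].
apply/forallP => -[[|[|[|a]]] Ha]; apply/forallP => -[[|[|[|b]]] Hb];
  rewrite !ffunE /= /pop_p' /=; try (exfalso; lia);
  try (apply/and3P; split => //; lia); try (apply/andP; split => //; lia).
Qed.

Lemma trans_inwin n (lam : 'I_n -> nat) (Hl : forall i j : 'I_n, i <= j -> lam j <= lam i)
  (R : 'S_n) : Defs.transversal lam (R^-1)%g = inwin (hh lam) R.
Proof.
apply/forallP/forallP => H x.
  by have := H (R x); rewrite permK keyF.
by have := H ((R^-1)%g x); rewrite permKV -keyF.
Qed.

Lemma numav n (lam : 'I_n -> nat) (Hl : forall i j : 'I_n, i <= j -> lam j <= lam i)
  (P : rel 'I_3) ord :
  (forall R : 'S_n, pop_contains P lam (R^-1)%g = ~~ validR ord (hh lam) R) ->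
  num_avoiders P lam = Nc ord n (hh lam).
Proof.
move=> HP; rewrite /num_avoiders /Nc -(card_preimset _ (@invg_inj _)).
apply: eq_card => R; rewrite !inE HP negbK.
by rewrite trans_inwin.
Qed.

Theorem theorem1p6 : shape_wilf_equiv pop_p pop_p'.
Proof.
move=> n lam [Hl _].
rewrite (@numav n lam Hl pop_p ltn); last first.
  by move=> R; rewrite (pop_gen Hl) exists21.
rewrite (@numav n lam Hl pop_p' gtr); last first.
  by move=> R; rewrite (pop_gen Hl) exists12.
exact: (core (hh_mono lam) (hh0 lam)).1.
Qed.
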